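(* Let $\mathbb{K}$ be a perfect field, $\mathbf{u}_1,\dots,\mathbf{u}_t\in\mathbb{K}^{\mathbb{N}^n}$, and assume $J=\mathrm{ann}(\mathbf{u}_1,\dots,\mathbf{u}_t)\subset\mathbb{K}[X_1,\dots,X_n]$ is zero-dimensional. Let $B$ be an integer such that for every $j$ the minimal polynomial of $X_j$ in $\mathbb{K}[X_1,\dots,X_n]/J$ has degree at most $B$. Fix $j\in\{1,\dots,n\}$ and a finite sequence of monomials $\mathscr{B}'_{j+1}$ in $\mathbb{K}[X_{j+1},\dots,X_n]$ (with $\mathscr{B}'_{n+1}=(1)$ if $j=n$), and let $\mathscr{C}_{j+1}=\{b'X_j^k : b'\in\mathscr{B}'_{j+1},\ 0\le k\le B-1\}$. For a finite family $\mathscr{B}$ of monomials in $\mathbb{K}[X_j,\dots,X_n]$, let $\mathsf{M}_{\mathscr{B}}$ be the matrix with rows indexed by pairs $(i,b')$, $1\le i\le t$, $b'\in\mathscr{C}_{j+1}$, columns indexed by $b\in\mathscr{B}$, and entries $\langle\mathbf{u}_i\mid bb'\rangle$. Then: (i) if $\mathscr{B}$ is dependent, the right nullspace of $\mathsf{M}_{\mathscr{B}}$ is non-trivial; (ii) if moreover $j\le n-1$, $\mathscr{B}'_{j+1}=\mathscr{B}_{j+1}$ and $J_j\cap\mathbb{K}[X_{j+1},\dots,X_n]=J_{j+1}$, then conversely, if the right nullspace of $\mathsf{M}_{\mathscr{B}}$ is non-trivial, $\mathscr{B}$ is dependent.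
   Context: For $m\in\mathbb{N}^n$, $\mathbf{X}^m=X_1^{m_1}\cdots X_n^{m_n}$; for a sequence $\mathbf{u}=(u_m)_m$ and $f=\sum_m f_m\mathbf{X}^m$, $\langle\mathbf{u}\mid f\rangle=\sum_m f_mu_m$, $f\cdot\mathbf{u}=(\langle\mathbf{u}\mid\mathbf{X}^mf\rangle)_m$, $\mathrm{ann}(\mathbf{u})$ is the ideal of $f$ with $f\cdot\mathbf{u}=0$ and $\mathrm{ann}(\mathbf{u}_1,\dots,\mathbf{u}_t)=\bigcap_i\mathrm{ann}(\mathbf{u}_i)$ (the same definitions apply to sequences indexed by $\mathbb{N}^{n-j+1}$ and polynomials in $X_j,\dots,X_n$). For $j=1,\dots,n$, $\pi_j(\mathbf{u}_i)$ is the sequence indexed by $\mathbb{N}^{n-j+1}$ with $\langle\pi_j(\mathbf{u}_i)\mid(m_j,\dots,m_n)\rangle=\langle\mathbf{u}_i\mid(0,\dots,0,m_j,\dots,m_n)\rangle$, and $J_j=\mathrm{ann}(\pi_j(\mathbf{u}_1),\dots,\pi_j(\mathbf{u}_t))\subset\mathbb{K}[X_j,\dots,X_n]$. $\mathscr{B}_j$ denotes the set of standard monomials (monomial basis) of $\mathbb{K}[X_j,\dots,X_n]/J_j$ with respect to the lexicographic order $X_j>\cdots>X_n$. A family of monomials in $\mathbb{K}[X_j,\dots,X_n]$ is independent if its images in $\mathbb{K}[X_j,\dots,X_n]/J_j$ are $\mathbb{K}$-linearly independent, and dependent otherwise. *)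

(* Defs.v *)
From HB Require Import structures.
From mathcomp Require Import all_boot all_order all_algebra.
From mathcomp Require Import mpoly.
Set Implicit Arguments. Unset Strict Implicit. Unset Printing Implicit Defensive.
Import Order.TTheory GRing.Theory.
Local Open Scope ring_scope.

(* Conventions: variables X_1..X_n of the paper are 'X_0 .. 'X_(n-1) here;
   a sequence indexed by N^n is a function 'X_{1..n} -> K (multinomials are
   n-tuples of nat). The paper's index j (1 <= j <= n) corresponds to
   j0 : 'I_n with j = j0+1. The subring K[X_j,...,X_n] of K[X_1..X_n] is
   the set of polynomials whose monomials have zero exponent in the
   variables of index < j0 (0-based); this is the canonical identification. *)

Definition perfect_field (K : fieldType) : Prop :=
  forall p : nat, p \in [pchar K] -> forall x : K, exists y : K, y ^+ p = x.

Section Defs.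
Variables (K : fieldType) (n : nat).

Definition pairing (u : 'X_{1..n} -> K) (f : {mpoly K[n]}) : K :=
  \sum_(m <- msupp f) f@_m * u m.

Definition in_ann (t : nat) (u : 'I_t -> 'X_{1..n} -> K) (f : {mpoly K[n]}) : Prop :=
  forall (i : 'I_t) (m : 'X_{1..n}), pairing (u i) ('X_[m] * f) = 0.

Definition mnm_from (k : nat) (m : 'X_{1..n}) : Prop :=
  forall l : 'I_n, (l < k)%N -> m l = 0%N.

Definition poly_from (k : nat) (f : {mpoly K[n]}) : Prop :=
  forall m, m \in msupp f -> mnm_from k m.

(* J_{k+1} = ann(pi_{k+1}(u_1),...,pi_{k+1}(u_t)) seen inside K[X_1..X_n]:
   <pi(u) | X^m f> = <u | X^m f> for m, f in the subring. *)
Definition in_Jsub (t : nat) (u : 'I_t -> 'X_{1..n} -> K) (k : nat)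
    (f : {mpoly K[n]}) : Prop :=
  poly_from k f /\
  forall (i : 'I_t) (m : 'X_{1..n}), mnm_from k m ->
    pairing (u i) ('X_[m] * f) = 0.

Definition zero_dimensional (J : {mpoly K[n]} -> Prop) : Prop :=
  exists S : seq {mpoly K[n]}, forall f : {mpoly K[n]},
    exists c : 'I_(size S) -> K, J (f - \sum_(k < size S) c k *: S`_k).

Definition peval (p : {poly K}) (j : 'I_n) : {mpoly K[n]} :=
  \sum_(k < size p) p`_k *: 'X_j ^+ k.

Definition is_minpoly (J : {mpoly K[n]} -> Prop) (j : 'I_n) (p : {poly K}) : Prop :=
  p \is monic /\ J (peval p j) /\
  forall q : {poly K}, q != 0 -> J (peval q j) -> (size p <= size q)%N.

Definition lex_lt (m m' : 'X_{1..n}) : Prop :=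
  exists i : 'I_n, (forall l : 'I_n, (l < i)%N -> m l = m' l) /\ (m i < m' i)%N.

Definition standard_mnm (t : nat) (u : 'I_t -> 'X_{1..n} -> K) (k : nat)
    (b : 'X_{1..n}) : Prop :=
  mnm_from k b /\
  ~ (exists f : {mpoly K[n]}, [/\ in_Jsub u k f, f != 0, b \in msupp f &
        forall m, m \in msupp f -> m != b -> lex_lt m b]).

Definition dependent_fam (t : nat) (u : 'I_t -> 'X_{1..n} -> K) (k : nat)
    (B : seq 'X_{1..n}) : Prop :=
  exists c : 'I_(size B) -> K, (exists l, c l != 0) /\
    in_Jsub u k (\sum_(l < size B) c l *: 'X_[nth 0%MM B l]).

Definition Cfam (j : 'I_n) (bound : nat) (B' : seq 'X_{1..n}) : seq 'X_{1..n} :=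
  [seq mnm_add b' (mnm_muln (mnm1 j) e) | b' <- B', e <- iota 0 bound].

Definition Mmat (t : nat) (u : 'I_t -> 'X_{1..n} -> K) (C B : seq 'X_{1..n}) :
    'M[K]_(#|{: 'I_t * 'I_(size C)}|, size B) :=
  \matrix_(r, l)
    let ic : 'I_t * 'I_(size C) := enum_val r in
    pairing (u ic.1) 'X_[mnm_add (nth 0%MM B l) (nth 0%MM C (nat_of_ord ic.2))].

Definition nontrivial_nullspace (p q : nat) (M : 'M[K]_(p, q)) : Prop :=
  exists v : 'cV[K]_q, v != 0 /\ M *m v = 0.

End Defs.

(* Main.v *)
Require Import Defs.
From HB Require Import structures.
From mathcomp Require Import all_boot all_order all_algebra.
From mathcomp Require Import mpoly.
From Stdlib Require Import Classical.
From mathcomp Require Import zify.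
Set Implicit Arguments. Unset Strict Implicit. Unset Printing Implicit Defensive.
Import Order.TTheory GRing.Theory.
Local Open Scope ring_scope.

Section Helpers.
Variables (K : fieldType) (n : nat).
Implicit Types (u : 'X_{1..n} -> K) (f g : {mpoly K[n]}).

Lemma pairingE u f (s : seq 'X_{1..n}) : uniq s -> {subset msupp f <= s} ->
  pairing u f = \sum_(m <- s) f@_m * u m.
Proof.
move=> us sub; rewrite (bigID (mem (msupp f))) /=.
rewrite [X in _ + X]big1 ?addr0; last first.
  move=> m Hm; have /eqP -> : f@_m == 0 by rewrite mcoeff_eq0.
  by rewrite mul0r.
rewrite -big_filter /pairing; apply: perm_big.
apply: uniq_perm; first exact: msupp_uniq.
  exact: filter_uniq.
by move=> m; rewrite mem_filter /=; case H: (m \in msupp f) => //=; rewrite sub.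
Qed.

Lemma pairingDZ u a f g : pairing u (a *: f + g) = a * pairing u f + pairing u g.
Proof.
set s := undup (msupp f ++ msupp g ++ msupp (a *: f + g)).
have us : uniq s by apply: undup_uniq.
rewrite (@pairingE u _ s) // ?(@pairingE u f s) ?(@pairingE u g s) //;
  try by move=> m mm; rewrite mem_undup !mem_cat mm ?orbT.
rewrite big_distrr -big_split /=; apply: eq_bigr => m _.
by rewrite mcoeffD mcoeffZ mulrDl mulrA.
Qed.

Lemma pairing0 u : pairing u 0 = 0.
Proof. by rewrite /pairing msupp0 big_nil. Qed.

Lemma pairingD u f g : pairing u (f + g) = pairing u f + pairing u g.
Proof. by rewrite -[f]scale1r pairingDZ mul1r scale1r. Qed.

Lemma pairingZ u a f : pairing u (a *: f) = a * pairing u f.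
Proof. by rewrite -[a *: f]addr0 pairingDZ pairing0 addr0. Qed.

Lemma pairing_sum u (I : Type) (r : seq I) (F : I -> {mpoly K[n]}) :
  pairing u (\sum_(i <- r) F i) = \sum_(i <- r) pairing u (F i).
Proof.
elim: r => [|x r IH]; first by rewrite !big_nil pairing0.
by rewrite !big_cons pairingD IH.
Qed.

Lemma pairingX u m : pairing u 'X_[m] = u m.
Proof. by rewrite /pairing msuppX big_seq1 mcoeffX eqxx mul1r. Qed.

Variables (t : nat) (u : 'I_t -> 'X_{1..n} -> K).

Lemma in_annDZ a f g : in_ann u f -> in_ann u g -> in_ann u (a *: f + g).
Proof.
move=> Hf Hg i m; rewrite mulrDr -scalerAr pairingDZ Hf Hg.
by rewrite mulr0 addr0.
Qed.

Lemma in_ann0 : in_ann u 0.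
Proof. by move=> i m; rewrite mulr0 pairing0. Qed.

Lemma in_annZ a f : in_ann u f -> in_ann u (a *: f).
Proof. by move=> Hf; rewrite -[_ *: f]addr0; apply: in_annDZ => //; apply: in_ann0. Qed.

Lemma in_ann_sum (I : Type) (r : seq I) (F : I -> {mpoly K[n]}) :
  (forall i, in_ann u (F i)) -> in_ann u (\sum_(i <- r) F i).
Proof.
move=> H; elim: r => [|x r IH]; first by rewrite big_nil; apply: in_ann0.
by rewrite big_cons -[F x]scale1r; apply: in_annDZ.
Qed.

Lemma peval_widen (p : {poly K}) (j : 'I_n) M : (size p <= M)%N ->
  peval p j = \sum_(k < M) p`_k *: 'X_j ^+ k.
Proof.
move=> HM; rewrite /peval (big_ord_widen M (fun k => p`_k *: 'X_j ^+ k) HM).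
rewrite big_mkcond; apply: eq_bigr => k _; case: ifP => // /negbT.
by rewrite -leqNgt => Hk; rewrite nth_default // scale0r.
Qed.

Lemma pevalZ (p : {poly K}) (j : 'I_n) a : peval (a *: p) j = a *: peval p j.
Proof.
rewrite (@peval_widen _ _ (size p)); last exact: size_scale_leq.
rewrite /peval scaler_sumr; apply: eq_bigr => k _.
by rewrite coefZ scalerA.
Qed.

Lemma minpoly_exists (j : 'I_n) : zero_dimensional (in_ann u) ->
  exists p, is_minpoly (in_ann u) j p.
Proof.
move=> [S HS].
pose N := size S.
have [C HC] : exists C : 'I_N.+1 -> 'I_N -> K, forall a : 'I_N.+1,
    in_ann u ('X_j ^+ a - \sum_(k < N) C a k *: S`_k).
  by have H := fun a : 'I_N.+1 => HS ('X_j ^+ a); exact: (fin_all_exists H).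
pose A : 'M[K]_(N.+1, N) := \matrix_(a, k) C a k.
have nrf : ~~ row_free A.
  rewrite /row_free; apply/negP => /eqP H.
  by have := rank_leq_col A; rewrite H ltnn.
have [r Hr] : exists r, row r (kermx A) != 0.
  apply/not_all_not_ex => H; move: nrf; rewrite -kermx_eq0 => /negP; apply.
  apply/eqP/row_matrixP => r; rewrite row0; apply/eqP/negPn/negP; exact: H.
pose w := row r (kermx A).
have wA : w *m A = 0 by rewrite /w -row_mul mulmx_ker row0.
have [a0 Ha0] : exists a, w 0 a != 0.
  apply/not_all_not_ex => H; move: Hr; rewrite -/w => /negP; apply.
  apply/eqP/matrixP => i k; rewrite ord1 [X in _ = X]mxE; apply/eqP/negPn/negP; exact: H.
pose q : {poly K} := \poly_(a < N.+1) w 0 (inord a).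
have qn0 : q != 0.
  apply/negP => /eqP q0; move: Ha0.
  have := @coef_poly K N.+1 (fun a => w 0 (inord a)) a0.
  by rewrite ltn_ord inord_val -/q q0 coef0 => <-; rewrite eqxx.
have qann : in_ann u (peval q j).
  have -> : peval q j = \sum_(a < N.+1) w 0 a *: ('X_j ^+ a - \sum_(k < N) C a k *: S`_k).
    rewrite (@peval_widen q j N.+1); last exact: size_poly.
    under [RHS]eq_bigr => a _ do rewrite scalerBr.
    rewrite sumrB.
    have -> : \sum_(a < N.+1) w 0 a *: \sum_(k < N) C a k *: S`_k = 0.
      under eq_bigr => a _ do rewrite scaler_sumr.
      rewrite exchange_big /= big1 // => k _.
      under eq_bigr => a _ do rewrite scalerA.
      rewrite -scaler_suml.
      have -> : \sum_(i < N.+1) w 0 i * C i k = (w *m A) 0 k.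
        by rewrite mxE; apply: eq_bigr => a _; rewrite /A !mxE.
      by rewrite wA mxE scale0r.
    rewrite subr0; apply: eq_bigr => a _.
    by rewrite coef_poly ltn_ord inord_val.
  by apply: in_ann_sum => a; apply: in_annZ.
pose Q (p : {poly K}) := p != 0 /\ in_ann u (peval p j).
have [q0 [Qq0 Hmin]] : exists q0, Q q0 /\ forall q', Q q' -> (size q0 <= size q')%N.
  have : forall d (p : {poly K}), size p = d -> Q p ->
      exists q0, Q q0 /\ forall q', Q q' -> (size q0 <= size q')%N.
    elim/ltn_ind => d IH p Hd Qp.
    case: (classic (exists q', Q q' /\ (size q' < d)%N)).
      by move=> [q' [Qq' Hq']]; apply: (IH _ Hq' q').
    move=> Hno; exists p; split => // q' Qq'; rewrite Hd leqNgt; apply/negP => H.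
    by apply: Hno; exists q'.
  by move=> H; apply: (H _ q erefl).
have lc0 : lead_coef q0 != 0 by rewrite lead_coef_eq0; case: Qq0.
exists ((lead_coef q0)^-1 *: q0); split; [|split].
- by rewrite monicE lead_coefZ mulVf.
- by rewrite pevalZ; apply: in_annZ; case: Qq0.
- move=> q' q'0 Hq'; rewrite size_scale ?invr_eq0 //; exact: Hmin.
Qed.
End Helpers.
Section Lex.
Variable n : nat.
Definition lexk (k : nat) (m m' : 'X_{1..n}) : Prop :=
  exists i : 'I_n, [/\ (k <= i)%N, (forall l : 'I_n, (k <= l)%N -> (l < i)%N -> m l = m' l)
     & (m i < m' i)%N].

Lemma lexk_wf_aux d : forall k, (k + d)%N = n -> well_founded (lexk k).
Proof.
elim: d => [|d IH] k Hk.
  rewrite addn0 in Hk; subst k => m; constructor => m' [i [Hi _ _]].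
  by have := ltn_ord i; rewrite ltnNge Hi.
have kn : (k < n)%N by rewrite -Hk addnS ltnS leq_addr.
have IH' : well_founded (lexk k.+1) by apply: IH; rewrite addSnnS.
pose k' := Ordinal kn.
suff H : forall (v : nat) (m : 'X_{1..n}), m k' = v -> Acc (lexk k) m by move=> m; exact: (H _ m erefl).
elim/ltn_ind => v IHv m.
elim: (IH' m) => {}m _ IHm Hv.
constructor => m' [i [ki Heq Hlt]].
have [ki'|ik] := ltnP k i.
  apply: (IHm m'); last by rewrite Heq // -Hv.
  exists i; split => // l kl li; apply: Heq => //; exact: ltnW.
have ik' : i = k' by apply: val_inj => /=; apply/eqP; rewrite eqn_leq ik ki.
subst i; apply: (IHv (m' k')) => //; by rewrite -Hv.
Qed.

Lemma lex_lt_lexk0 m m' : lex_lt m m' -> lexk 0 m m'.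
Proof. by move=> [i [H1 H2]]; exists i; split => // l _; apply: H1. Qed.

Lemma lexk0_wf : well_founded (lexk 0).
Proof. by apply: (@lexk_wf_aux n). Qed.
End Lex.

Section Mnm.
Variable n : nat.
Lemma mnm_from_add k (m1 m2 : 'X_{1..n}) : mnm_from k m1 -> mnm_from k m2 -> mnm_from k (m1 + m2)%MM.
Proof. by move=> H1 H2 l Hl; rewrite mnmDE H1 // H2. Qed.
Lemma mnm_from_U k (j : 'I_n) e : (k <= j)%N -> mnm_from k (U_(j) *+ e)%MM.
Proof.
move=> kj l Hl; rewrite mulmnE mnm1E.
have -> : (j == l) = false by apply/negP => /eqP jl; move: Hl; rewrite -jl ltnNge kj.
by rewrite mul0n.
Qed.
Lemma mnm_from_le k k' (m : 'X_{1..n}) : (k <= k')%N -> mnm_from k' m -> mnm_from k m.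
Proof. by move=> kk H l Hl; apply: H; exact: leq_trans Hl kk. Qed.
End Mnm.

Lemma pairing_Xsum (K : fieldType) n (u : 'X_{1..n} -> K) M (s : seq 'X_{1..n}) (c : 'I_(size s) -> K) :
  pairing u ('X_[M] * \sum_(l < size s) c l *: 'X_[nth 0%MM s l]) =
  \sum_(l < size s) pairing u 'X_[mnm_add (nth 0%MM s l) M] * c l.
Proof.
rewrite mulr_sumr pairing_sum; apply: eq_bigr => l _.
by rewrite -scalerAr -mpolyXD pairingZ mulrC addmC.
Qed.

Theorem lemma4 (K : fieldType) (n t : nat) (u : 'I_t -> 'X_{1..n} -> K)
    (bound : nat) (j : 'I_n) (B' : seq 'X_{1..n}) :
  perfect_field K ->
  zero_dimensional (in_ann u) ->
  (forall (k : 'I_n) (p : {poly K}), is_minpoly (in_ann u) k p ->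
      ((size p).-1 <= bound)%N) ->
  (forall b', b' \in B' -> mnm_from j.+1 b') ->
  (j.+1 = n -> B' = [:: 0%MM]) ->
  forall B : seq 'X_{1..n}, (forall b, b \in B -> mnm_from j b) ->
  (dependent_fam u j B ->
     nontrivial_nullspace (Mmat u (Cfam j bound B') B))
  /\
  ((j.+1 < n)%N ->
   (forall b, b \in B' <-> standard_mnm u j.+1 b) ->
   (forall f, (in_Jsub u j f /\ poly_from j.+1 f) <-> in_Jsub u j.+1 f) ->
   nontrivial_nullspace (Mmat u (Cfam j bound B') B) ->
   dependent_fam u j B).
Proof.
move=> _ Hzd Hbound HB' _ B HB.
pose C := Cfam j bound B'.
have HC : forall c, c \in C -> mnm_from j c.
  move=> c /allpairsP [[b' e] /= [Hb' _ ->]].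
  apply: mnm_from_add; first by apply: (mnm_from_le (leqnSn j)); apply: HB'.
  exact: mnm_from_U.
split.
  move=> [c [[l Hl] [_ Hc]]].
  exists (\col_l c l); split.
    apply/negP => /eqP H; move: Hl.
    have : (\col_l0 c l0) l 0 = 0 by rewrite H mxE.
    by rewrite mxE => ->; rewrite eqxx.
  apply/matrixP => r k; rewrite ord1 !mxE.
  set ic := enum_val r.
  have idxlt : (ic.2 < size C)%N by [].
  have := Hc ic.1 (nth 0%MM C ic.2) (HC _ (mem_nth _ idxlt)).
  rewrite pairing_Xsum => H; rewrite -[X in _ = X]H; apply: eq_bigr => l1 _; by rewrite !mxE.
move=> Hjn HBstd HJ [v [vn0 Mv0]].
pose f := \sum_(l < size B) v l 0 *: 'X_[nth 0%MM B l].
pose phi (i : 'I_t) (g : {mpoly K[n]}) := pairing (u i) (g * f).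
have phiDZ : forall i a g h, phi i (a *: g + h) = a * phi i g + phi i h.
  by move=> i a g h; rewrite /phi mulrDl -scalerAl pairingDZ.
have phiZ : forall i a g, phi i (a *: g) = a * phi i g.
  by move=> i a g; rewrite -[a *: g]addr0 phiDZ /phi mul0r pairing0 addr0.
have phi_sum : forall i (I : Type) (r : seq I) (F : I -> {mpoly K[n]}),
    phi i (\sum_(x <- r) F x) = \sum_(x <- r) phi i (F x).
  by move=> i I r F; rewrite /phi mulr_suml pairing_sum.
have phiJ : forall g, (forall i M', mnm_from j M' -> pairing (u i) ('X_[M'] * g) = 0) ->
    forall i M, mnm_from j M -> phi i ('X_[M] * g) = 0.
  move=> g Hg i M HM; rewrite /phi /f mulr_sumr pairing_sum big1 // => l _.
  rewrite -scalerAr mulrAC -mpolyXD pairingZ Hg ?mulr0 //.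
  by apply: mnm_from_add => //; apply: HB; apply: mem_nth.
have P0 : forall i c, c \in C -> phi i 'X_[c] = 0.
  move=> i c Hc.
  have idxlt : (index c C < size C)%N by rewrite index_mem.
  have := congr1 (fun M : 'M[K]_(#|{: 'I_t * 'I_(size C)}|, 1) => M (enum_rank ((i, Ordinal idxlt) : 'I_t * 'I_(size C))) 0) Mv0.
  rewrite !mxE => H; rewrite /phi /f pairing_Xsum -[X in _ = X]H.
  apply: eq_bigr => l _; rewrite !mxE enum_rankK /= nth_index //.
have Step1 : forall m', mnm_from j.+1 m' -> forall e, (e < bound)%N ->
    forall i, phi i 'X_[m' + U_(j) *+ e] = 0.
  elim/(well_founded_induction (@lexk0_wf n)) => m' IH Hm' e He i.
  case: (boolP (m' \in B')) => Hin.
    apply: P0; apply: allpairs_f => //; by rewrite mem_iota.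
  have Hns : ~ standard_mnm u j.+1 m' by move/HBstd; rewrite (negbTE Hin).
  have [g [Hg gn0 Hm'g Hlt]] : exists g : {mpoly K[n]}, [/\ in_Jsub u j.+1 g, g != 0, m' \in msupp g &
        forall m, m \in msupp g -> m != m' -> lex_lt m m'].
    by apply: NNPP => H; apply: Hns; split.
  have [[_ Hgj] _] := (HJ g).2 Hg.
  have HE : mnm_from j (U_(j) *+ e)%MM by apply: mnm_from_U.
  have := phiJ g Hgj i _ HE.
  have -> : 'X_[U_(j) *+ e] * g = \sum_(m <- msupp g) g@_m *: 'X_[m + U_(j) *+ e].
    rewrite {1}(mpolyE g) mulr_sumr; apply: eq_bigr => m _.
    by rewrite -scalerAr -mpolyXD addmC.
  rewrite phi_sum (big_rem m') //= big1_seq ?addr0; last first.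
    move=> m /andP [_ Hm]; move: Hm; rewrite mem_rem_uniq ?msupp_uniq //.
    move=> /andP [/= mm' Hm]; rewrite phiZ IH ?mulr0 //.
      by apply: lex_lt_lexk0; apply: Hlt.
    by apply: Hg.1.
  rewrite phiZ => /eqP; rewrite mulf_eq0 => /orP [|/eqP //].
  by move=> H; move: Hm'g; rewrite mcoeff_msupp H.
have [p Hp] := @minpoly_exists K n t u j Hzd.
have Hd := Hbound j p Hp.
case: Hp => pmon [pann _].
have sp : size p = (size p).-1.+1 by rewrite prednK // size_poly_gt0 monic_neq0.
set d := (size p).-1 in Hd sp.
have Step2 : forall e m', mnm_from j.+1 m' -> forall i, phi i 'X_[m' + U_(j) *+ e] = 0.
  elim/ltn_ind => e IH m' Hm' i.
  case: (ltnP e bound) => Heb; first exact: Step1.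
  have de : (d <= e)%N by apply: leq_trans Hd Heb.
  have HM : mnm_from j (m' + U_(j) *+ (e - d))%MM.
    by apply: mnm_from_add; [apply: (mnm_from_le (leqnSn j)) | apply: mnm_from_U].
  have := phiJ _ (fun i M' _ => pann i M') i _ HM.
  have Xe : forall k, 'X_[m' + U_(j) *+ (e - d)] * 'X_j ^+ k = 'X_[m' + U_(j) *+ (e - d + k)] :> {mpoly K[n]}.
    move=> k; rewrite mpolyXn -mpolyXD; congr ('X_[_]); apply/mnmP => l.
    by rewrite !mnmDE !mulmnE mulnDr addnA.
  rewrite /peval mulr_sumr phi_sum.
  under eq_bigr => k _ do rewrite -scalerAr Xe phiZ.
  rewrite sp big_ord_recr /= big1 ?add0r; last first.
    move=> k _; rewrite IH ?mulr0 //.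
    have := ltn_ord k; lia.
  have -> : p`_d = 1 by move: pmon; rewrite monicE lead_coefE => /eqP.
  by rewrite mul1r subnK.
exists (fun l => v l 0); split.
  apply: NNPP => H; move/negP: vn0; apply; apply/eqP/matrixP => l k.
  rewrite ord1 mxE; apply/eqP/negPn/negP => Hl; apply: H; by exists l.
split.
  move=> m; rewrite mcoeff_msupp raddf_sum => Hm.
  case: (boolP (m \in B)) => [/HB //|mB]; exfalso; move/negP: Hm; apply; apply/eqP.
  apply: big1 => l _; rewrite /= mcoeffZ mcoeffX.
  case: eqP => [El|_]; last by rewrite mulr0.
  by move: mB; rewrite -El mem_nth.
move=> i M HM.
pose M' : 'X_{1..n} := [multinom if l == j then 0%N else M l | l < n].
have HM' : mnm_from j.+1 M'.
  move=> l Hl; rewrite mnmE; case: eqP => // /eqP lj; apply: HM.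
  by rewrite ltn_neqAle lj -ltnS.
have -> : M = (M' + U_(j) *+ (M j))%MM.
  apply/mnmP => l; rewrite mnmDE mulmnE mnm1E mnmE.
  by case: eqP => [->|/eqP lj]; rewrite ?eqxx ?mul1n // eq_sym (negbTE lj) mul0n addn0.
exact: Step2.
Qed.
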